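(* Let $p,q\in\mathbb{C}$ with $pq\neq 1$. The following two conditions are equivalent: (i) $\mathcal{S}_{p,q}$ maps every positive triangle triple to a positive triangle triple; (ii) either $p=q\neq \tfrac12$, or $p\neq q$ and $\frac{(p-1)(2q-1)}{p-q}\in\mathbb{R}\cup\mathcal{H}^+$, where $\mathcal{H}^+=\{z\in\mathbb{C}:\operatorname{Im}z>0\}$.
   Context: A triangle triple is an ordered triple $(a,b,c)\in\mathbb{C}^3$ with pairwise distinct entries; it is degenerate if $a,b,c$ are collinear, and positive if it is non-degenerate and $\operatorname{Im}\frac{a-b}{c-b}>0$. For $p,q\in\mathbb{C}$ with $pq\neq1$ put $\alpha_{p,q}=\frac{p(1-q)}{1-pq}$, $\beta_{p,q}=\frac{q(1-p)}{1-pq}$, $\gamma_{p,q}=\frac{(1-p)(1-q)}{1-pq}$, and define the linear map $\mathcal{S}_{p,q}:\mathbb{C}^3\to\mathbb{C}^3$ by $\mathcal{S}_{p,q}(a,b,c)=(\alpha_{p,q}a+\beta_{p,q}b+\gamma_{p,q}c,\ \alpha_{p,q}b+\beta_{p,q}c+\gamma_{p,q}a,\ \alpha_{p,q}c+\beta_{p,q}a+\gamma_{p,q}b)$. *)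

(* Defs.v *)
(* complex numbers as an arbitrary numClosedFieldType
   (C = R[i] with R real closed; e.g. algC). *)
From HB Require Import structures.
From mathcomp Require Import all_boot all_order all_algebra.
Set Implicit Arguments. Unset Strict Implicit. Unset Printing Implicit Defensive.
Import Order.TTheory GRing.Theory Num.Theory.
Local Open Scope ring_scope.

Section TriangleDefs.
Variable C : numClosedFieldType.

Definition triangle_triple (a b c : C) : Prop := a <> b /\ b <> c /\ a <> c.

(* a, b, c collinear: the (real) determinant Im((b - a) * conj(c - a)) vanishes *)
Definition collinear (a b c : C) : Prop := 'Im ((b - a) * (c - a)^*) = 0.

Definition degenerate (a b c : C) : Prop := triangle_triple a b c /\ collinear a b c.

Definition positive_triple (a b c : C) : Prop :=
  triangle_triple a b c /\ ~ collinear a b c /\ 0 < 'Im ((a - b) / (c - b)).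

Definition alphaS (p q : C) : C := p * (1 - q) / (1 - p * q).
Definition betaS (p q : C) : C := q * (1 - p) / (1 - p * q).
Definition gammaS (p q : C) : C := (1 - p) * (1 - q) / (1 - p * q).

Definition S_map (p q : C) (t : C * C * C) : C * C * C :=
  let: (a, b, c) := t in
  (alphaS p q * a + betaS p q * b + gammaS p q * c,
   alphaS p q * b + betaS p q * c + gammaS p q * a,
   alphaS p q * c + betaS p q * a + gammaS p q * b).

Definition Hplus (z : C) : Prop := 0 < 'Im z.

End TriangleDefs.

(* Main.v *)
Require Import Defs.
From HB Require Import structures.
From mathcomp Require Import all_boot all_order all_algebra.
From mathcomp Require Import ring.
Import Order.TTheory GRing.Theory Num.Theory.
Local Open Scope ring_scope.
Set Implicit Arguments. Unset Strict Implicit.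
Section S.
Variable C : numClosedFieldType.
Implicit Types x y P Q X Y a b c : C.
Lemma cM x y : (x*y)^* = x^* * y^*. Proof. exact: rmorphM. Qed.
Lemma cD x y : (x+y)^* = x^* + y^*. Proof. exact: rmorphD. Qed.
Lemma cB x y : (x-y)^* = x^* - y^*. Proof. exact: rmorphB. Qed.
Lemma cN x : (-x)^* = - x^*. Proof. exact: rmorphN. Qed.

Local Ltac cexp := rewrite ?ImE ?ReE ?normCK; rewrite ?(cM, cD, cB, cN, conjCK, conjCi).

Definition Kf P Q := `|P|^+2 + `|Q|^+2 + 'Re (P*Q^*).
Definition Mf P Q := - 'Im (P*Q^*).
Definition Nf x y := `|x|^+2 + `|y|^+2 - 'Re (x*y^*).

Lemma key P Q x y : 'Im ((P*x+Q*y) * (-(Q*x) + (P+Q)*y)^*) =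
  Kf P Q * 'Im (x*y^*) + Mf P Q * Nf x y.
Proof. rewrite /Kf /Mf /Nf. cexp. by field. Qed.

Lemma K2 P Q : Kf P Q = (`|P|^+2 + `|Q|^+2 + `|P+Q|^+2)/2.
Proof. rewrite /Kf. cexp. by field. Qed.

Lemma N2 x y : Nf x y = (`|x|^+2 + `|y|^+2 + `|x-y|^+2)/2.
Proof. rewrite /Nf. cexp. by field. Qed.

Lemma Kge0 P Q : 0 <= Kf P Q.
Proof. by rewrite K2 divr_ge0 // !addr_ge0 // exprn_ge0. Qed.

Lemma Kgt0 P Q : P != 0 \/ P + Q != 0 -> 0 < Kf P Q.
Proof.
move=> h; rewrite K2 divr_gt0 //; case: h => h.
  by rewrite -addrA ltr_wpDr ?addr_ge0 ?exprn_ge0 // exprn_gt0 // normr_gt0.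
by rewrite ltr_wpDl ?addr_ge0 ?exprn_ge0 // exprn_gt0 // normr_gt0.
Qed.

Lemma Nge2 x y : `|x|^+2 / 2 <= Nf x y.
Proof.
rewrite N2 ler_pM2r ?invr_gt0 // -addrA lerDl addr_ge0 // exprn_ge0 //.
Qed.

Lemma Mreal P Q : Mf P Q \is Num.real.
Proof. by rewrite rpredN Creal_Im. Qed.

Lemma Im_divc X Y : 'Im (X / Y) = 'Im (X * Y^*) / `|Y|^+2.
Proof. rewrite Im_div ImM Im_conj Re_conj. congr (_ / _). ring. Qed.

Lemma Im0 : 'Im (0 : C) = 0.
Proof. by rewrite ImE rmorph0 subrr mulr0 mul0r. Qed.

Lemma imgt X Y : (0 < 'Im (X / Y)) <-> (0 < 'Im (X*Y^*)).
Proof.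
rewrite Im_divc; case: (Y =P 0) => [->|/eqP nz].
  by rewrite rmorph0 mulr0 Im0 mul0r.
by rewrite pmulr_lgt0 // invr_gt0 exprn_gt0 // normr_gt0.
Qed.

Lemma pos_iff a b c : positive_triple a b c <-> 0 < 'Im ((a-b)*(c-b)^*).
Proof.
rewrite /positive_triple /triangle_triple /collinear.
have col : 'Im ((b - a) * (c - a)^*) = - 'Im ((a-b)*(c-b)^*) by cexp; field.
split; first by case=> _ [_ /imgt].
move=> hp; split; last split; last by apply/imgt.
  split; last split.
  - move=> e; move: hp; rewrite e.
    have -> : 'Im ((b - b) * (c - b)^*) = 0 by cexp; field.
    by rewrite ltxx.
  - move=> e; move: hp; rewrite e.
    have -> : 'Im ((a - c) * (c - c)^*) = 0 by cexp; field.
    by rewrite ltxx.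
  - move=> e; move: hp; rewrite e.
    have -> : 'Im ((c - b) * (c - b)^*) = 0 by cexp; field.
    by rewrite ltxx.
rewrite col => /eqP; rewrite oppr_eq0 => /eqP e; by rewrite e ltxx in hp.
Qed.

Lemma Mzl P Q : 'Im (Q / (P + Q)) = Mf P Q / `|P + Q| ^+ 2.
Proof. by rewrite Im_divc; congr (_ / _); rewrite /Mf; cexp; field. Qed.

Lemma MfN P : Mf P (-P) = 0.
Proof. by rewrite /Mf; cexp; field. Qed.

Lemma Nge0 x y : 0 <= Nf x y.
Proof. by rewrite N2 divr_ge0 // !addr_ge0 // exprn_ge0. Qed.

Lemma Sred p q a b c :
  (let: (a', b', c') := S_map p q (a, b, c) in positive_triple a' b' c') <->
  0 < Kf (alphaS p q - gammaS p q) (gammaS p q - betaS p q) * 'Im ((a-b)*(c-b)^*)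
    + Mf (alphaS p q - gammaS p q) (gammaS p q - betaS p q) * Nf (a-b) (c-b).
Proof.
rewrite /= pos_iff -key.
set P := alphaS p q - gammaS p q; set Q := gammaS p q - betaS p q.
have -> : alphaS p q * a + betaS p q * b + gammaS p q * c -
    (alphaS p q * b + betaS p q * c + gammaS p q * a) = P * (a - b) + Q * (c - b).
  by rewrite /P /Q; ring.
have -> : alphaS p q * c + betaS p q * a + gammaS p q * b -
    (alphaS p q * b + betaS p q * c + gammaS p q * a) = - (Q * (a - b)) + (P + Q) * (c - b).
  by rewrite /P /Q; ring.
by [].
Qed.
End S.

Ltac cexp := rewrite ?ImE ?ReE ?normCK; rewrite ?(cM, cD, cB, cN, conjCK, conjCi).

Theorem proposition2p1 (C : numClosedFieldType) (p q : C) (hpq : p * q != 1) :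
  (forall a b c : C, positive_triple a b c ->
     let: (a', b', c') := S_map p q (a, b, c) in positive_triple a' b' c')
  <->
  ((p = q /\ p <> 2^-1) \/
   (p <> q /\ (let z := (p - 1) * (2 * q - 1) / (p - q) in
               z \is Num.real \/ Hplus z))).
Proof.
have hD : 1 - p * q != 0 by rewrite subr_eq0 eq_sym.
set P := alphaS p q - gammaS p q; set Q := gammaS p q - betaS p q.
have hP : P = (1 - q) * (2 * p - 1) / (1 - p * q).
  by rewrite /P /alphaS /gammaS; field.
have hQ : Q = (1 - p) * (1 - 2 * q) / (1 - p * q).
  by rewrite /Q /betaS /gammaS; field.
have hPQ : P + Q = (p - q) / (1 - p * q).
  by rewrite hP hQ; field.
have two0 : (2 : C) != 0 by rewrite pnatr_eq0.
split.
- move=> hi.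
  case: (eqVneq p q) => [epq|npq].
  + left; split=> // ep.
    have P0 : P = 0 by rewrite hP -epq ep; field.
    have Q0 : Q = 0 by rewrite hQ -epq ep; field.
    have := hi 1 0 (- 'i).
    rewrite Sred -/P -/Q P0 Q0.
    have -> : Kf (0:C) 0 * 'Im ((1 - 0) * (- 'i - 0)^*) + Mf (0:C) 0 * Nf (1 - 0) (- 'i - 0) = 0.
      by rewrite /Kf /Mf /Nf; cexp; field.
    rewrite ltxx => h; suff : false by []; apply: h.
    by rewrite pos_iff !subr0 mul1r cN conjCi opprK Im_i ltr01.
  + right; split; first exact/eqP.
    have PQ0 : P + Q != 0 by rewrite hPQ mulf_neq0 ?invr_eq0 // subr_eq0.
    have hz : (p - 1) * (2 * q - 1) / (p - q) = Q / (P + Q).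
      by rewrite hPQ hQ; field; rewrite hD subr_eq0 npq.
    have Kp := Kgt0 (or_intror PQ0).
    have Mge : 0 <= Mf P Q.
      rewrite real_leNgt ?Mreal //; apply/negP => Mlt.
      set t := - Mf P Q / (2 * Kf P Q).
      have tr : t \is Num.real.
        apply: rpredM; first by rewrite rpredN Mreal.
        by rewrite rpredV rpredM ?realn ?gtr0_real.
      have tp : 0 < t by rewrite divr_gt0 ?mulr_gt0 // oppr_gt0.
      have hH : 'Im (2 * (1 - 'i * t)^*) = 2 * t.
        rewrite cB rmorph1 cM conjCi (conj_Creal tr).
        have -> : 2 * (1 - - 'i * t) = 2 + 'i * (2 * t) by ring.
        by rewrite Im_rect ?realn // rpredM ?realn.
      have := hi 2 0 (1 - 'i * t).
      rewrite Sred -/P -/Q !subr0 hH.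
      have -> : Kf P Q * (2 * t) = - Mf P Q.
        by rewrite /t; field; rewrite gt_eqF.
      have pos2 : positive_triple 2 0 (1 - 'i * t) by rewrite pos_iff !subr0 hH mulr_gt0.
      move=> H; have {}H := H pos2.
      have hN : 2 <= Nf 2 (1 - 'i * t).
        apply: le_trans (Nge2 _ _); rewrite normr_nat.
        by rewrite le_eqVlt; apply/orP; left; apply/eqP; field.
      have hle : - Mf P Q + Mf P Q * Nf 2 (1 - 'i * t) <= Mf P Q.
        have : Mf P Q * Nf 2 (1 - 'i * t) <= Mf P Q * 2 by rewrite ler_nM2l.
        move=> h2; apply: le_trans (lerD (lexx _) h2) _.
        by rewrite le_eqVlt; apply/orP; left; apply/eqP; ring.
      by have := lt_trans (lt_le_trans H hle) Mlt; rewrite ltxx.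
    move=> z; rewrite /z hz.
    have : 0 <= 'Im (Q / (P + Q)) by rewrite Mzl divr_ge0 // exprn_ge0.
    rewrite le0r => /orP [/eqP h | h]; [left; exact/Creal_ImP | by right].
- move=> h.
  have [Kp Mge] : 0 < Kf P Q /\ 0 <= Mf P Q.
    case: h => [[epq np]|[npq hz]].
    + have PQ0 : P + Q = 0 by rewrite hPQ epq subrr mul0r.
      have P0 : P != 0.
        rewrite hP -epq; apply: mulf_neq0; last by rewrite invr_eq0; rewrite -epq in hD.
        apply: mulf_neq0.
          rewrite subr_eq0; apply: contra hpq => /eqP e.
          by rewrite -epq -e mulr1.
        apply/negP => /eqP e; apply: np.
        apply: (mulfI two0); rewrite mulfV //.
        by apply/eqP; rewrite -subr_eq0; apply/eqP.
      split; first exact: Kgt0 (or_introl P0).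
      have eQ : Q = - P by apply/eqP; rewrite -addr_eq0 addrC PQ0.
      by rewrite eQ MfN.
    + have PQ0 : P + Q != 0 by rewrite hPQ mulf_neq0 ?invr_eq0 // subr_eq0; exact/eqP.
      split; first exact: Kgt0 (or_intror PQ0).
      have hz2 : (p - 1) * (2 * q - 1) / (p - q) = Q / (P + Q).
        by rewrite hPQ hQ; field; rewrite hD subr_eq0; apply/eqP.
      have Iz : 0 <= 'Im (Q / (P + Q)).
        move: hz; rewrite /Hplus /= hz2.
        by case => [/Creal_ImP -> // | /ltW].
      rewrite Mzl in Iz.
      have -> : Mf P Q = Mf P Q / `|P + Q| ^+ 2 * `|P + Q| ^+ 2.
        by rewrite divfK // expf_neq0 // normr_eq0.
      by rewrite mulr_ge0 // exprn_ge0.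
  move=> a b c pos; rewrite Sred -/P -/Q.
  rewrite pos_iff in pos.
  by rewrite ltr_wpDr ?mulr_ge0 ?Nge0 // mulr_gt0.
Qed.
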